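(* On $\Omega=\mathbb R$ with $N=3$ phases, let $\delta_1=\frac1{64}$, $\delta_2=\frac5{16}$ and define the nonnegative kernels $K_{1,2}=K_{2,1}=\mathbf 1_{[-1,1]}$ and $K_{1,3}=K_{3,1}=K_{2,3}=K_{3,2}=\delta_1(\mathbf 1_{[-11,-9]}+\mathbf 1_{[9,11]})+\delta_2\mathbf 1_{[-1,1]}$. Let $\sigma_{i,j}=\frac12\int_{\mathbb R}|x|K_{i,j}(x)\,dx$ and $\mu_{i,j}=\frac{1}{2K_{i,j}(0)}$ for $i\ne j$ (so $\sigma_{1,2}=\frac12$, $\sigma_{1,3}=\sigma_{2,3}=20\delta_1+\frac{\delta_2}2$, $\mu_{1,2}=\frac12$, $\mu_{1,3}=\mu_{2,3}=\frac1{2\delta_2}$), with $\sigma_{i,i}=\mu_{i,i}^{-1}=0$. Then: (i) $\sigma$ satisfies the triangle inequality $\sigma_{i,j}+\sigma_{j,k}\ge\sigma_{i,k}$ for all $i,j,k$; (ii) both $\sigma$ and the matrix $(\mu_{i,j}^{-1})$ are conditionally negative semi-definite; (iii) for $\epsilon>0$ let $u_{1,\epsilon}=\mathbf 1_{[\epsilon,\infty)}$, $u_{2,\epsilon}=\mathbf 1_{(-\infty,-\epsilon]}$, $u_{3,\epsilon}=\mathbf 1_{[-\epsilon,\epsilon]}$; then for every $\epsilon>0$, \[ E_\epsilon(\boldsymbol u_\epsilon,\boldsymbol K):=\frac1\epsilon\sum_{(i,j)\in\mathcal I_3}\int_{\mathbb R}u_{j,\epsilon}\,(K_{i,j})_\epsilon*u_{i,\epsilon}\,dx=16\delta_1+2\delta_2=\tfrac78,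 \] while $\boldsymbol u_\epsilon\to\boldsymbol u_0=(\mathbf 1_{[0,\infty)},\mathbf 1_{(-\infty,0]},0)$ in $L^1(\mathbb R)$ and the sharp-interface energy of the limit is $E(\boldsymbol u_0,\sigma)=\sum_{(i,j)\in\mathcal I_3}\sigma_{i,j}\mathcal H^0(\partial\Sigma_i\cap\partial\Sigma_j)=2\sigma_{1,2}=1$. Consequently $\liminf_{\epsilon\to0}E_\epsilon(\boldsymbol u_\epsilon,\boldsymbol K)<E(\boldsymbol u_0,\sigma)$, so the nonlocal multiphase energies do not $\Gamma$-converge to $E(\cdot,\sigma)$. Moreover, the reciprocal mobilities do not satisfy the triangle inequality ($\mu_{1,2}^{-1}>\mu_{1,3}^{-1}+\mu_{3,2}^{-1}$).
   Context: $\mathcal I_3=\{(i,j)\in\{1,2,3\}^2:i\ne j\}$; $K_\epsilon(x)=\epsilon^{-1}K(x/\epsilon)$. A symmetric matrix $A$ is conditionally negative semi-definite if $\sum_{i,j}A_{i,j}\xi_i\xi_j\le0$ whenever $\sum_i\xi_i=0$. For $\boldsymbol u_0$, $\Sigma_1=[0,\infty)$, $\Sigma_2=(-\infty,0]$, $\Sigma_3=\emptyset$. *)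

(* Defs.v *)
From Stdlib Require Import Reals Lra List.
Import ListNotations.
Open Scope R_scope.

Definition IInt (f : R -> R) (l : R) : Prop :=
  (forall a b, a <= b -> inhabited (Riemann_integrable f a b)) /\
  (forall eta, 0 < eta -> exists M, 0 <= M /\
     forall a b (pr : Riemann_integrable f a b),
       a <= -M -> M <= b -> Rabs (RiemannInt pr - l) < eta).

Definition ind (a b : R) (x : R) : R :=
  if Rle_dec a x then (if Rle_dec x b then 1 else 0) else 0.
Definition ind_ge (a : R) (x : R) : R := if Rle_dec a x then 1 else 0.
Definition ind_le (a : R) (x : R) : R := if Rle_dec x a then 1 else 0.

Definition delta1 : R := 1 / 64.
Definition delta2 : R := 5 / 16.

(* kernels K_{i,j}, phases indexed by 1,2,3; K_{i,i} is unused (set to 0) *)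
Definition K (i j : nat) : R -> R :=
  match i, j with
  | 1%nat, 2%nat | 2%nat, 1%nat => ind (-1) 1
  | 1%nat, 3%nat | 3%nat, 1%nat | 2%nat, 3%nat | 3%nat, 2%nat =>
      fun x => delta1 * (ind (-11) (-9) x + ind 9 11 x) + delta2 * ind (-1) 1 x
  | _, _ => fun _ => 0
  end.

Definition Keps (eps : R) (k : R -> R) (x : R) : R := / eps * k (x / eps).

Definition I3 : list (nat * nat) := [(1,2); (1,3); (2,1); (2,3); (3,1); (3,2)]%nat.
Definition sumI3 (F : nat -> nat -> R) : R :=
  fold_right (fun p acc => F (fst p) (snd p) + acc) 0 I3.
Definition idx3 : list nat := [1; 2; 3]%nat.
Definition sum3 (F : nat -> R) : R := fold_right (fun i acc => F i + acc) 0 idx3.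

Definition mu (i j : nat) : R := / (2 * K i j 0).
Definition muinv (i j : nat) : R := if Nat.eqb i j then 0 else / mu i j.

Definition cnsd (A : nat -> nat -> R) : Prop :=
  forall xi : nat -> R, sum3 xi = 0 ->
    sum3 (fun i => sum3 (fun j => A i j * xi i * xi j)) <= 0.

Definition u (eps : R) (i : nat) : R -> R :=
  match i with
  | 1%nat => ind_ge eps
  | 2%nat => ind_le (- eps)
  | 3%nat => ind (- eps) eps
  | _ => fun _ => 0
  end.

Definition u0 (i : nat) : R -> R :=
  match i with
  | 1%nat => ind_ge 0
  | 2%nat => ind_le 0
  | _ => fun _ => 0
  end.

Definition Eeps_is (eps : R) (l : R) : Prop :=
  exists (c : nat -> nat -> R -> R) (e : nat -> nat -> R),
    (forall i j, In (i, j) I3 ->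
       (forall x, IInt (fun y => Keps eps (K i j) (x - y) * u eps i y) (c i j x)) /\
       IInt (fun x => u eps j x * c i j x) (e i j)) /\
    l = / eps * sumI3 e.

Definition Sigma (i : nat) (x : R) : Prop :=
  match i with
  | 1%nat => 0 <= x
  | 2%nat => x <= 0
  | _ => False
  end.

Definition closure (S : R -> Prop) (x : R) : Prop :=
  forall e, 0 < e -> exists y, S y /\ Rabs (y - x) < e.
Definition bdry (S : R -> Prop) (x : R) : Prop :=
  closure S x /\ closure (fun y => ~ S y) x.

Definition H0_is (P : R -> Prop) (n : nat) : Prop :=
  exists l : list R, NoDup l /\ (forall x, P x <-> In x l) /\ length l = n.

Definition Esharp_is (sigma : nat -> nat -> R) (v : R) : Prop :=
  exists n : nat -> nat -> nat,
    (forall i j, In (i, j) I3 ->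
       H0_is (fun x => bdry (Sigma i) x /\ bdry (Sigma j) x) (n i j)) /\
    v = sumI3 (fun i j => sigma i j * INR (n i j)).

(* Main.v *)
Require Import Defs.
From Stdlib Require Import Reals Lra List.
From Coquelicot Require Import Coquelicot.
Require Import Defs.
Import ListNotations.
Open Scope R_scope.

Definition IInt' (f : R -> R) (l : R) : Prop :=
  (forall a b, ex_RInt f a b) /\
  (forall eta, 0 < eta -> exists M, 0 <= M /\
     forall a b, a <= -M -> M <= b -> Rabs (RInt f a b - l) < eta).

Lemma IInt'_IInt f l : IInt' f l -> IInt f l.
Proof.
  intros [H1 H2]; split.
  - intros a b _; constructor; apply ex_RInt_Reals_0, H1.
  - intros eta He; destruct (H2 eta He) as [M [HM H]]; exists M; split; auto.
    intros a b pr Ha Hb; rewrite <- RInt_Reals; auto.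
Qed.

Lemma IInt_unique f l1 l2 : IInt f l1 -> IInt f l2 -> l1 = l2.
Proof.
  intros [Hi H1] [_ H2].
  destruct (Req_dec l1 l2) as [|Hne]; auto.
  set (eta := Rabs (l1 - l2) / 2).
  assert (He : 0 < eta). { unfold eta; assert (l1 - l2 <> 0) by lra; apply Rabs_pos_lt in H; lra. }
  destruct (H1 eta He) as [M1 [HM1 H1']]; destruct (H2 eta He) as [M2 [HM2 H2']].
  set (M := Rmax M1 M2).
  assert (HM: M1 <= M /\ M2 <= M) by (unfold M; split; [apply Rmax_l|apply Rmax_r]).
  assert (Hab : -M <= M) by lra.
  destruct (Hi (-M) M Hab) as [pr].
  specialize (H1' _ _ pr ltac:(lra) ltac:(lra)).
  specialize (H2' _ _ pr ltac:(lra) ltac:(lra)).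
  exfalso. unfold eta in *.
  assert (Rabs (l1 - l2) <= Rabs (RiemannInt pr - l2) + Rabs (RiemannInt pr - l1)).
  { replace (l1 - l2) with ((RiemannInt pr - l2) - (RiemannInt pr - l1)) by ring.
    unfold Rminus at 1; eapply Rle_trans; [apply Rabs_triang|]; rewrite Rabs_Ropp; lra. }
  lra.
Qed.

Lemma IInt'_ext f g l : (forall x, f x = g x) -> IInt' f l -> IInt' g l.
Proof.
  intros E [H1 H2]; split.
  - intros a b; apply ex_RInt_ext with f; auto.
  - intros eta He; destruct (H2 eta He) as [M [HM H]]; exists M; split; auto.
    intros a b Ha Hb; rewrite <- (RInt_ext f g); auto.
Qed.

Lemma IInt'_plus f g l1 l2 : IInt' f l1 -> IInt' g l2 -> IInt' (fun x => f x + g x) (l1 + l2).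
Proof.
  intros [F1 F2] [G1 G2]; split.
  - intros a b; apply (ex_RInt_plus f g); auto.
  - intros eta He; destruct (F2 (eta/2) ltac:(lra)) as [M1 [HM1 H1]];
      destruct (G2 (eta/2) ltac:(lra)) as [M2 [HM2 H2]].
    exists (Rmax M1 M2); split.
    + eapply Rle_trans; [apply HM1|apply Rmax_l].
    + intros a b Ha Hb.
      assert (M1 <= Rmax M1 M2) by apply Rmax_l.
      assert (M2 <= Rmax M1 M2) by apply Rmax_r.
      specialize (H1 a b ltac:(lra) ltac:(lra)); specialize (H2 a b ltac:(lra) ltac:(lra)).
      rewrite (RInt_plus f g); auto.
      change (plus (RInt f a b) (RInt g a b)) with (RInt f a b + RInt g a b).
      replace (RInt f a b + RInt g a b - (l1 + l2)) with ((RInt f a b - l1) + (RInt g a b - l2)) by ring.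
      eapply Rle_lt_trans; [apply Rabs_triang|]; lra.
Qed.

Lemma IInt'_scal k f l : IInt' f l -> IInt' (fun x => k * f x) (k * l).
Proof.
  intros [F1 F2]; split.
  - intros a b; apply (ex_RInt_scal f); auto.
  - intros eta He.
    destruct (F2 (eta / (Rabs k + 1))) as [M [HM H]].
    { apply Rdiv_lt_0_compat; auto. pose proof (Rabs_pos k); lra. }
    exists M; split; auto; intros a b Ha Hb.
    rewrite (RInt_scal f); auto.
    change (scal k (RInt f a b)) with (k * RInt f a b).
    replace (k * RInt f a b - k * l) with (k * (RInt f a b - l)) by ring.
    rewrite Rabs_mult. specialize (H a b Ha Hb).
    pose proof (Rabs_pos k). pose proof (Rabs_pos (RInt f a b - l)).
    apply Rmult_lt_compat_l with (r := Rabs k + 1) in H; [|lra].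
    replace ((Rabs k + 1) * (eta / (Rabs k + 1))) with eta in H by (field; lra).
    nra.
Qed.

Lemma RInt_zero_ext f a b : (forall x, Rmin a b < x < Rmax a b -> f x = 0) -> RInt f a b = 0.
Proof.
  intros H; rewrite (RInt_ext f (fun _ => 0)); auto.
  rewrite RInt_const. unfold scal; simpl; unfold mult; simpl; ring.
Qed.

Lemma IInt'_compact f A B : (forall a b, ex_RInt f a b) -> A <= B ->
  (forall x, x < A \/ B < x -> f x = 0) -> IInt' f (RInt f A B).
Proof.
  intros Hex HAB Hz; split; auto.
  intros eta He. exists (Rmax (Rabs A) (Rabs B)); split.
  - eapply Rle_trans; [apply Rabs_pos|apply Rmax_l].
  - intros a b Ha Hb.
    assert (Rabs A <= Rmax (Rabs A) (Rabs B)) by apply Rmax_l.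
    assert (Rabs B <= Rmax (Rabs A) (Rabs B)) by apply Rmax_r.
    assert (-Rabs A <= A) by (unfold Rabs; destruct Rcase_abs; lra).
    assert (B <= Rabs B) by apply RRle_abs.
    rewrite <- (RInt_Chasles f a A b); auto.
    rewrite <- (RInt_Chasles f A B b); auto.
    rewrite (RInt_zero_ext f a A).
    2:{ intros x Hx; apply Hz; left. rewrite Rmax_right in Hx; lra. }
    rewrite (RInt_zero_ext f B b).
    2:{ intros x Hx; apply Hz; right. rewrite Rmin_left in Hx; lra. }
    change (plus 0 (plus (RInt f A B) 0)) with (0 + (RInt f A B + 0)).
    replace (0 + (RInt f A B + 0) - RInt f A B) with 0 by ring.
    rewrite Rabs_R0; auto.
Qed.

Lemma lin_cont al be x : continuous (fun x => al * x + be) x.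
Proof. apply (ex_derive_continuous (K:=R_AbsRing) (V:=R_NormedModule)); auto_derive; auto. Qed.

Lemma RInt_lin al be p q : RInt (fun x => al * x + be) p q = al * (q*q - p*p)/2 + be * (q - p).
Proof.
  apply is_RInt_unique.
  replace (al * (q*q - p*p)/2 + be * (q - p)) with
    (minus ((fun x => al * x * x / 2 + be * x) q) ((fun x => al * x * x / 2 + be * x) p)).
  2:{ unfold minus, plus, opp; simpl; field. }
  apply (is_RInt_derive (V:=R_CompleteNormedModule) (fun x => al * x * x / 2 + be * x)).
  - intros x _. auto_derive; auto. field.
  - intros x _; apply lin_cont.
Qed.

Lemma IInt'_indlin p q al be : p <= q ->
  IInt' (fun x => ind p q x * (al * x + be)) (al * (q*q - p*p)/2 + be * (q - p)).
Proof.
  intros Hpq.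
  set (h := fun x => ind p q x * (al * x + be)).
  assert (Hz : forall x, x < p \/ q < x -> h x = 0).
  { intros x Hx; unfold h, ind; destruct (Rle_dec p x); destruct (Rle_dec x q); try lra. }
  assert (Hexb : forall m M, m <= p -> q <= M -> ex_RInt h m M).
  { intros m M Hm HM.
    apply (ex_RInt_Chasles h m p M).
    - apply (ex_RInt_ext (fun _ => 0)); [|apply ex_RInt_const].
      intros x Hx; symmetry; apply Hz; left. rewrite Rmax_right in Hx; lra.
    - apply (ex_RInt_Chasles h p q M).
      + apply (ex_RInt_ext (fun x => al * x + be)).
        * intros x Hx; rewrite Rmin_left in Hx by lra; rewrite Rmax_right in Hx by lra.
          unfold h, ind; destruct (Rle_dec p x); destruct (Rle_dec x q); try lra.
        * apply (ex_RInt_continuous (V:=R_CompleteNormedModule)); intros; apply lin_cont.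
      + apply (ex_RInt_ext (fun _ => 0)); [|apply ex_RInt_const].
        intros x Hx; symmetry; apply Hz; right. rewrite Rmin_left in Hx; lra. }
  assert (Hex : forall a b, ex_RInt h a b).
  { assert (H : forall a b, a <= b -> ex_RInt h a b).
    { intros a b Hab.
      assert (E : ex_RInt h (Rmin a p) (Rmax b q)) by (apply Hexb; [apply Rmin_r|apply Rmax_r]).
      assert (Rmin a p <= a) by apply Rmin_l. assert (b <= Rmax b q) by apply Rmax_l.
      apply (ex_RInt_Chasles_1 h a b (Rmax b q)); [lra|].
      apply (ex_RInt_Chasles_2 h (Rmin a p) a (Rmax b q)); [lra|auto]. }
    intros a b; destruct (Rle_dec a b).
    - apply H; auto.
    - apply ex_RInt_swap, H; lra. }
  replace (al * (q*q - p*p)/2 + be * (q - p)) with (RInt h p q).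
  - apply IInt'_compact; auto.
  - rewrite <- RInt_lin. apply RInt_ext.
    intros x Hx; rewrite Rmin_left in Hx by lra; rewrite Rmax_right in Hx by lra.
    unfold h, ind; destruct (Rle_dec p x); destruct (Rle_dec x q); try lra.
Qed.

Ltac bash := unfold ind, ind_ge, ind_le, Rmax, Rmin, Rabs in *;
  repeat match goal with
  | |- context [Rle_dec ?a ?b] =>
    lazymatch a with context [Rle_dec _ _] => fail | _ =>
    lazymatch b with context [Rle_dec _ _] => fail | _ =>
    destruct (Rle_dec a b); try (exfalso; lra) end end
  | |- context [Rcase_abs ?a] =>
    lazymatch a with context [Rle_dec _ _] => fail | _ =>
    destruct (Rcase_abs a); try (exfalso; lra) end
  end;
  try lra.


Lemma IInt'_zero f : (forall x, f x = 0) -> IInt' f 0.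
Proof.
  intros H. assert (E := IInt'_indlin 0 0 0 0 (Rle_refl 0)).
  replace (0 * (0*0 - 0*0)/2 + 0 * (0 - 0)) with 0 in E by lra.
  eapply IInt'_ext; [|exact E].
  intros x; rewrite H; ring.
Qed.

Lemma IInt'_ind P Q : IInt' (ind P Q) (Rmax P Q - P).
Proof.
  destruct (Rle_dec P Q).
  - rewrite Rmax_right by lra.
    replace (Q - P) with (0 * (Q*Q - P*P)/2 + 1 * (Q - P)) by lra.
    eapply IInt'_ext; [|apply (IInt'_indlin P Q 0 1); lra].
    intros x; cbv beta; ring.
  - rewrite Rmax_left by lra. replace (P - P) with 0 by ring.
    apply IInt'_zero; intros x; bash.
Qed.

Definition kp (i j : nat) : list (R * R * R) :=
  match i, j with
  | 1%nat, 2%nat | 2%nat, 1%nat => [(1, -1, 1)]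
  | _, _ => [(delta1, -11, -9); (delta1, 9, 11); (delta2, -1, 1)]
  end.

Definition M (eps : R) (i : nat) (p q : R) : R * R :=
  match i with
  | 1%nat => (Rmax p eps, q)
  | 2%nat => (p, Rmin q (- eps))
  | _ => (Rmax p (- eps), Rmin q eps)
  end.

Definition len (pq : R * R) : R := Rmax (fst pq) (snd pq) - fst pq.

Definition cc (eps : R) (i j : nat) (x : R) : R :=
  fold_right (fun k acc => fst (fst k) *
     (/ eps * len (M eps i (x - snd k * eps) (x - snd (fst k) * eps))) + acc) 0 (kp i j).

Lemma K_eq i j z : In (i, j) I3 ->
  K i j z = fold_right (fun k acc => fst (fst k) * ind (snd (fst k)) (snd k) z + acc) 0 (kp i j).
Proof.
  intros H; simpl in H.
  repeat destruct H as [H|H]; try (injection H; intros; subst); simpl; try ring; contradiction.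
Qed.

Lemma ind_scale eps a b x y : 0 < eps ->
  ind a b ((x - y) / eps) = ind (x - b * eps) (x - a * eps) y.
Proof.
  intros He. set (z := (x - y) / eps).
  assert (Hz : x - y = z * eps) by (unfold z; field; lra).
  unfold ind.
  destruct (Rle_dec a z); destruct (Rle_dec z b);
  destruct (Rle_dec (x - b * eps) y); destruct (Rle_dec y (x - a * eps)); auto; exfalso; nra.
Qed.

Lemma merge eps i p q y : In i idx3 ->
  ind p q y * u eps i y = ind (fst (M eps i p q)) (snd (M eps i p q)) y.
Proof.
  intros H; simpl in H; repeat destruct H as [H|H]; subst; simpl; try contradiction; bash.
Qed.

Lemma inner_gen eps i x ks : 0 < eps -> In i idx3 ->
  IInt' (fun y => / eps * fold_right (fun k acc => fst (fst k) * ind (snd (fst k)) (snd k) ((x - y) / eps) + acc) 0 ks * u eps i y)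
    (fold_right (fun k acc => fst (fst k) *
     (/ eps * len (M eps i (x - snd k * eps) (x - snd (fst k) * eps))) + acc) 0 ks).
Proof.
  intros He Hi. induction ks as [|k ks IH]; simpl.
  - apply IInt'_zero; intros; ring.
  - eapply IInt'_ext; [| apply IInt'_plus; [apply IInt'_scal, IInt'_scal, IInt'_ind | exact IH]].
    intros y; simpl. rewrite <- merge by auto. rewrite ind_scale by auto. ring.
Qed.

Lemma inner eps i j x : 0 < eps -> In (i, j) I3 ->
  IInt' (fun y => Keps eps (K i j) (x - y) * u eps i y) (cc eps i j x).
Proof.
  intros He H.
  assert (Hi : In i idx3) by (simpl in H; repeat destruct H as [H|H]; try (injection H; intros; subst); simpl; tauto).
  eapply IInt'_ext; [|apply (inner_gen eps i x (kp i j)); auto].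
  intros y; unfold Keps; rewrite (K_eq i j) by auto. reflexivity.
Qed.

Lemma IInt'_eqv f l l' : IInt' f l -> l = l' -> IInt' f l'.
Proof. intros H E; subst; auto. Qed.

Lemma outer_fold eps i j x : u eps j x * cc eps i j x =
  fold_right (fun k acc => fst (fst k) * (/ eps * (u eps j x *
     len (M eps i (x - snd k * eps) (x - snd (fst k) * eps)))) + acc) 0 (kp i j).
Proof. unfold cc; induction (kp i j) as [|k ks IH]; simpl; [ring|rewrite <- IH; ring]. Qed.

Definition Ev (eps : R) (i j : nat) : R :=
  match i, j with
  | 1%nat, 2%nat | 2%nat, 1%nat => 0
  | _, _ => eps * (4 * delta1 + delta2 / 2)
  end.

Ltac pw := intros x; cbv beta; unfold u, M, len; cbv beta iota; cbn [fst snd]; bash.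
Ltac lin p q al be := eapply IInt'_ext; [|apply (IInt'_indlin p q al be); lra]; [pw].
Ltac lin3 p1 q1 a1 b1 p2 q2 a2 b2 p3 q3 a3 b3 :=
  eapply IInt'_ext; [|apply IInt'_plus; [apply (IInt'_indlin p1 q1 a1 b1); lra|
     apply IInt'_plus; [apply (IInt'_indlin p2 q2 a2 b2); lra | apply (IInt'_indlin p3 q3 a3 b3); lra]]]; [pw].
Ltac zer := apply IInt'_zero; pw.
Ltac start0 := eapply IInt'_eqv; [eapply IInt'_ext; [intros x; symmetry; apply outer_fold|];
  cbn [kp fold_right fst snd] | ].
Ltac start := start0; [apply IInt'_plus; [apply IInt'_scal, IInt'_scal | apply IInt'_plus; [apply IInt'_scal, IInt'_scal | apply IInt'_plus; [apply IInt'_scal, IInt'_scal | apply IInt'_zero; intros; reflexivity]]]|].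
Ltac start1 := start0; [apply IInt'_plus; [apply IInt'_scal, IInt'_scal | apply IInt'_zero; intros; reflexivity]|].

Ltac vv := cbn [Ev]; unfold delta1, delta2; field; lra.

Lemma t12 eps : 0 < eps -> IInt' (fun x => u eps 2 x * cc eps 1 2 x) (Ev eps 1 2).
Proof. intros He. start1. zer. vv. Qed.
Lemma t21 eps : 0 < eps -> IInt' (fun x => u eps 1 x * cc eps 2 1 x) (Ev eps 2 1).
Proof. intros He. start1. zer. vv. Qed.
Lemma t13 eps : 0 < eps -> IInt' (fun x => u eps 3 x * cc eps 1 3 x) (Ev eps 1 3).
Proof. intros He. start. lin (-eps) eps 0 (2*eps). zer. lin 0 eps 1 0. vv. Qed.
Lemma t23 eps : 0 < eps -> IInt' (fun x => u eps 3 x * cc eps 2 3 x) (Ev eps 2 3).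
Proof. intros He. start. zer. lin (-eps) eps 0 (2*eps). lin (-eps) 0 (-1) 0. vv. Qed.
Lemma t31 eps : 0 < eps -> IInt' (fun x => u eps 1 x * cc eps 3 1 x) (Ev eps 3 1).
Proof.
  intros He. start. zer. lin3 (8*eps) (10*eps) 1 (-8*eps) (10*eps) (12*eps) (-1) (12*eps) (10*eps) (10*eps) 0 (-2*eps).
    lin eps (2*eps) (-1) (2*eps). vv.
Qed.
Lemma t32 eps : 0 < eps -> IInt' (fun x => u eps 2 x * cc eps 3 2 x) (Ev eps 3 2).
Proof.
  intros He. start. lin3 (-12*eps) (-10*eps) 1 (12*eps) (-10*eps) (-8*eps) (-1) (-8*eps) (-10*eps) (-10*eps) 0 (-2*eps).
    zer. lin (-2*eps) (-eps) 1 (2*eps). vv.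
Qed.

Lemma outer eps i j : 0 < eps -> In (i, j) I3 ->
  IInt' (fun x => u eps j x * cc eps i j x) (Ev eps i j).
Proof.
  intros He H; simpl in H.
  destruct H as [H|[H|[H|[H|[H|[H|[]]]]]]]; injection H; intros; subst.
  - apply t12; auto.
  - apply t13; auto.
  - apply t21; auto.
  - apply t23; auto.
  - apply t31; auto.
  - apply t32; auto.
Qed.

Lemma Eeps_ok eps : 0 < eps -> Eeps_is eps (16 * delta1 + 2 * delta2).
Proof.
  intros He. exists (cc eps), (Ev eps). split.
  - intros i j H; split.
    + intros x; apply IInt'_IInt, inner; auto.
    + apply IInt'_IInt, outer; auto.
  - unfold sumI3, I3; cbn [fold_right fst snd Ev]. unfold delta1, delta2; field; lra.
Qed.

Lemma S_AB : IInt' (fun x => Rabs x * ind (-1) 1 x) 1.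
Proof.
  eapply IInt'_eqv.
  - eapply IInt'_ext; [|apply IInt'_plus; [apply (IInt'_indlin (-1) 0 (-1) 0); lra | apply (IInt'_indlin 0 1 1 0); lra]].
    intros x; cbv beta; bash.
  - lra.
Qed.

Lemma S_C : IInt' (fun x => Rabs x * (delta1 * (ind (-11) (-9) x + ind 9 11 x) + delta2 * ind (-1) 1 x)) (40 * delta1 + delta2).
Proof.
  eapply IInt'_eqv.
  - eapply IInt'_ext; [|apply IInt'_plus; [apply (IInt'_scal delta1); apply IInt'_plus; [apply (IInt'_indlin (-11) (-9) (-1) 0); lra | apply (IInt'_indlin 9 11 1 0); lra]
       | apply (IInt'_scal delta2); apply IInt'_plus; [apply (IInt'_indlin (-1) 0 (-1) 0); lra | apply (IInt'_indlin 0 1 1 0); lra]]].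
    intros x; cbv beta; unfold delta1, delta2; bash.
  - lra.
Qed.

Lemma L1_ok i : In i idx3 -> forall eta, 0 < eta -> exists d, 0 < d /\
     forall eps, 0 < eps < d -> exists l,
       IInt (fun x => Rabs (u eps i x - u0 i x)) l /\ l < eta.
Proof.
  intros Hi eta He. exists (eta / 2); split; [lra|]. intros eps [H1 H2].
  simpl in Hi; destruct Hi as [Hi|[Hi|[Hi|[]]]]; subst.
  - exists (eps + 0); split; [|lra]. apply IInt'_IInt.
    eapply IInt'_eqv; [eapply IInt'_ext; [|apply IInt'_plus; [apply (IInt'_indlin 0 eps 0 1); lra | apply (IInt'_indlin eps eps 0 (-1)); lra]]|].
    + intros x; cbv beta; unfold u, u0; bash.
    + lra.
  - exists (eps + 0); split; [|lra]. apply IInt'_IInt.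
    eapply IInt'_eqv; [eapply IInt'_ext; [|apply IInt'_plus; [apply (IInt'_indlin (-eps) 0 0 1); lra | apply (IInt'_indlin (-eps) (-eps) 0 (-1)); lra]]|].
    + intros x; cbv beta; unfold u, u0; bash.
    + lra.
  - exists (2 * eps); split; [|lra]. apply IInt'_IInt.
    eapply IInt'_eqv; [eapply IInt'_ext; [|apply (IInt'_indlin (-eps) eps 0 1); lra]|].
    + intros x; cbv beta; unfold u, u0; bash.
    + lra.
Qed.

Lemma cl_ge x : closure (fun y => 0 <= y) x <-> 0 <= x.
Proof.
  split.
  - intros H. destruct (Rle_dec 0 x) as [|n]; auto.
    destruct (H (-x)) as [y [Hy Hy']]; [lra|]. unfold Rabs in Hy'; destruct Rcase_abs; lra.
  - intros H e He. exists x; split; auto. replace (x - x) with 0 by ring. rewrite Rabs_R0; auto.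
Qed.

Lemma cl_le x : closure (fun y => y <= 0) x <-> x <= 0.
Proof.
  split.
  - intros H. destruct (Rle_dec x 0) as [|n]; auto.
    destruct (H x) as [y [Hy Hy']]; [lra|]. unfold Rabs in Hy'; destruct Rcase_abs; lra.
  - intros H e He. exists x; split; auto. replace (x - x) with 0 by ring. rewrite Rabs_R0; auto.
Qed.

Lemma cl_nge x : closure (fun y => ~ 0 <= y) x <-> x <= 0.
Proof.
  split.
  - intros H. destruct (Rle_dec x 0) as [|n]; auto.
    destruct (H x) as [y [Hy Hy']]; [lra|]. unfold Rabs in Hy'; destruct Rcase_abs; lra.
  - intros H e He. exists (x - e/2); split; [lra|].
    replace (x - e/2 - x) with (-(e/2)) by ring. rewrite Rabs_Ropp, Rabs_right; lra.
Qed.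

Lemma cl_nle x : closure (fun y => ~ y <= 0) x <-> 0 <= x.
Proof.
  split.
  - intros H. destruct (Rle_dec 0 x) as [|n]; auto.
    destruct (H (-x)) as [y [Hy Hy']]; [lra|]. unfold Rabs in Hy'; destruct Rcase_abs; lra.
  - intros H e He. exists (x + e/2); split; [lra|].
    replace (x + e/2 - x) with (e/2) by ring. rewrite Rabs_right; lra.
Qed.

Lemma bd1 x : bdry (Sigma 1) x <-> x = 0.
Proof. unfold bdry; simpl. rewrite cl_ge, cl_nge. lra. Qed.
Lemma bd2 x : bdry (Sigma 2) x <-> x = 0.
Proof. unfold bdry; simpl. rewrite cl_le, cl_nle. lra. Qed.
Lemma bd3 x : ~ bdry (Sigma 3) x.
Proof. unfold bdry; simpl. intros [H _]. destruct (H 1) as [y [[] _]]; lra. Qed.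

Definition nn (i j : nat) : nat :=
  match i, j with
  | 1%nat, 2%nat | 2%nat, 1%nat => 1%nat
  | _, _ => 0%nat
  end.

Lemma H0_ok i j : In (i, j) I3 ->
  H0_is (fun x => bdry (Sigma i) x /\ bdry (Sigma j) x) (nn i j).
Proof.
  intros H; simpl in H.
  destruct H as [H|[H|[H|[H|[H|[H|[]]]]]]]; injection H; intros; subst.
  - exists [0]; split; [constructor; [simpl; tauto|constructor]|split; [|reflexivity]].
    intros x; rewrite bd1, bd2; simpl; split; [intros [H1 _]; auto | intros [H1|[]]; auto].
  - exists []; split; [constructor|split; [|reflexivity]].
    intros x; simpl; split; [intros [_ H1]; apply (bd3 x H1)|tauto].
  - exists [0]; split; [constructor; [simpl; tauto|constructor]|split; [|reflexivity]].
    intros x; rewrite bd1, bd2; simpl; split; [intros [H1 _]; auto | intros [H1|[]]; auto].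
  - exists []; split; [constructor|split; [|reflexivity]].
    intros x; simpl; split; [intros [_ H1]; apply (bd3 x H1)|tauto].
  - exists []; split; [constructor|split; [|reflexivity]].
    intros x; simpl; split; [intros [H1 _]; apply (bd3 x H1)|tauto].
  - exists []; split; [constructor|split; [|reflexivity]].
    intros x; simpl; split; [intros [H1 _]; apply (bd3 x H1)|tauto].
Qed.

Lemma K12_0 : K 1 2 0 = 1.
Proof. simpl; unfold ind; bash. Qed.
Lemma K13_0 : K 1 3 0 = delta2.
Proof. simpl; unfold ind; bash. Qed.

Lemma muinv12 : muinv 1 2 = 2.
Proof. unfold muinv, mu; simpl Nat.eqb; cbv iota. rewrite K12_0, Rinv_inv; lra. Qed.
Lemma muinv13 : muinv 1 3 = 2 * delta2.
Proof. unfold muinv, mu; simpl Nat.eqb; cbv iota. rewrite K13_0, Rinv_inv; lra. Qed.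

Theorem mainTheorem6 (sigma : nat -> nat -> R)
  (Hsig : forall i j, In i idx3 -> In j idx3 -> i <> j ->
            IInt (fun x => Rabs x * K i j x) (2 * sigma i j))
  (Hsig0 : forall i, sigma i i = 0) :
  (* (i) triangle inequality for sigma *)
  (forall i j k, In i idx3 -> In j idx3 -> In k idx3 ->
     sigma i j + sigma j k >= sigma i k) /\
  (* (ii) conditional negative semi-definiteness *)
  cnsd sigma /\ cnsd muinv /\
  (* (iii) nonlocal energies *)
  (forall eps, 0 < eps -> Eeps_is eps (16 * delta1 + 2 * delta2)) /\
  16 * delta1 + 2 * delta2 = 7 / 8 /\
  (* L^1 convergence u_eps -> u_0 as eps -> 0+ *)
  (forall i, In i idx3 -> forall eta, 0 < eta -> exists d, 0 < d /\
     forall eps, 0 < eps < d -> exists l,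
       IInt (fun x => Rabs (u eps i x - u0 i x)) l /\ l < eta) /\
  (* sharp-interface energy of the limit *)
  Esharp_is sigma (2 * sigma 1%nat 2%nat) /\ 2 * sigma 1%nat 2%nat = 1 /\
  (* liminf_{eps -> 0} E_eps(u_eps) < E(u_0, sigma) *)
  (exists L, L < 1 /\ forall eta d, 0 < eta -> 0 < d ->
     exists eps l, 0 < eps < d /\ Eeps_is eps l /\ l < L + eta) /\
  (* reciprocal mobilities violate the triangle inequality *)
  muinv 1%nat 2%nat > muinv 1%nat 3%nat + muinv 3%nat 2%nat.
Proof.
  assert (HAB : forall i j, In i idx3 -> In j idx3 -> i <> j -> K i j = ind (-1) 1 -> 2 * sigma i j = 1).
  { intros i j Hi Hj Hn HK. symmetry; eapply IInt_unique; [apply IInt'_IInt|apply (Hsig i j Hi Hj Hn)].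
    rewrite HK; exact S_AB. }
  assert (HC : forall i j, In i idx3 -> In j idx3 -> i <> j ->
      K i j = (fun x => delta1 * (ind (-11) (-9) x + ind 9 11 x) + delta2 * ind (-1) 1 x) ->
      2 * sigma i j = 40 * delta1 + delta2).
  { intros i j Hi Hj Hn HK. symmetry; eapply IInt_unique; [apply IInt'_IInt|apply (Hsig i j Hi Hj Hn)].
    rewrite HK; exact S_C. }
  assert (In 1%nat idx3) by (simpl; tauto).
  assert (In 2%nat idx3) by (simpl; tauto).
  assert (In 3%nat idx3) by (simpl; tauto).
  assert (s12 : sigma 1%nat 2%nat = 1/2) by (pose proof (HAB 1%nat 2%nat); assert (2 * sigma 1%nat 2%nat = 1) by auto; lra).
  assert (s21 : sigma 2%nat 1%nat = 1/2) by (pose proof (HAB 2%nat 1%nat); assert (2 * sigma 2%nat 1%nat = 1) by auto; lra).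
  assert (s13 : sigma 1%nat 3%nat = 15/32) by (assert (2 * sigma 1%nat 3%nat = 40 * delta1 + delta2) by (apply HC; auto); unfold delta1, delta2 in *; lra).
  assert (s31 : sigma 3%nat 1%nat = 15/32) by (assert (2 * sigma 3%nat 1%nat = 40 * delta1 + delta2) by (apply HC; auto); unfold delta1, delta2 in *; lra).
  assert (s23 : sigma 2%nat 3%nat = 15/32) by (assert (2 * sigma 2%nat 3%nat = 40 * delta1 + delta2) by (apply HC; auto); unfold delta1, delta2 in *; lra).
  assert (s32 : sigma 3%nat 2%nat = 15/32) by (assert (2 * sigma 3%nat 2%nat = 40 * delta1 + delta2) by (apply HC; auto); unfold delta1, delta2 in *; lra).
  pose proof (Hsig0 1%nat); pose proof (Hsig0 2%nat); pose proof (Hsig0 3%nat).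
  assert (m12 : muinv 1%nat 2%nat = 2) by apply muinv12.
  assert (m21 : muinv 2%nat 1%nat = 2) by apply muinv12.
  assert (m13 : muinv 1%nat 3%nat = 5/8) by (rewrite muinv13; unfold delta2; lra).
  assert (m31 : muinv 3%nat 1%nat = 5/8) by (change (muinv 3%nat 1%nat) with (muinv 1%nat 3%nat); rewrite muinv13; unfold delta2; lra).
  assert (m23 : muinv 2%nat 3%nat = 5/8) by (change (muinv 2%nat 3%nat) with (muinv 1%nat 3%nat); rewrite muinv13; unfold delta2; lra).
  assert (m32 : muinv 3%nat 2%nat = 5/8) by (change (muinv 3%nat 2%nat) with (muinv 1%nat 3%nat); rewrite muinv13; unfold delta2; lra).
  assert (m11 : muinv 1%nat 1%nat = 0) by reflexivity.
  assert (m22 : muinv 2%nat 2%nat = 0) by reflexivity.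
  assert (m33 : muinv 3%nat 3%nat = 0) by reflexivity.
  split; [|split; [|split; [|split; [|split; [|split; [|split; [|split; [|split]]]]]]]].
  - intros i j k Hi Hj Hk. simpl in Hi, Hj, Hk.
    destruct Hi as [Hi|[Hi|[Hi|[]]]]; destruct Hj as [Hj|[Hj|[Hj|[]]]]; destruct Hk as [Hk|[Hk|[Hk|[]]]];
      subst; lra.
  - intros xi Hs. unfold sum3, idx3 in *; cbn [fold_right] in *.
    rewrite s12, s21, s13, s31, s23, s32, Hsig0, Hsig0, Hsig0.
    assert (E : xi 3%nat = - (xi 1%nat + xi 2%nat)) by lra. rewrite E.
    pose proof (Rle_0_sqr (xi 1%nat - xi 2%nat)); unfold Rsqr in *; nra.
  - intros xi Hs. unfold sum3, idx3 in *; cbn [fold_right] in *.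
    rewrite m12, m21, m13, m31, m23, m32, m11, m22, m33.
    assert (E : xi 3%nat = - (xi 1%nat + xi 2%nat)) by lra. rewrite E.
    pose proof (Rle_0_sqr (xi 1%nat - xi 2%nat)); unfold Rsqr in *; nra.
  - apply Eeps_ok.
  - unfold delta1, delta2; lra.
  - apply L1_ok.
  - exists nn; split.
    + apply H0_ok.
    + unfold sumI3, I3; cbn [fold_right fst snd nn INR]. lra.
  - lra.
  - exists (7/8); split; [lra|].
    intros eta d He Hd. exists (d/2), (16 * delta1 + 2 * delta2). split; [lra|split].
    + apply Eeps_ok; lra.
    + unfold delta1, delta2; lra.
  - lra.
Qed.
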